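(* Consider the semi-discrete scheme $$\frac{du_i}{dt}=\frac{1}{\Delta x}\big(F_{i-1/2}-F_{i+1/2}\big)+\bar u_{i-1/2},\qquad \bar u_{i+1/2}=\frac{u_i+u_{i+1}}2,$$ $$F_{i+1/2}=\begin{cases}u_i^2/2 & \text{if }\bar u_{i+1/2}>0,\\ 0&\text{if }\bar u_{i+1/2}=0,\\ u_{i+1}^2/2&\text{if }\bar u_{i+1/2}<0,\end{cases}$$ for the equation $u_t+(u^2/2)_x=u$, with $\Delta x>0$. Let $\{u_i\}$ be a sequence at which the right-hand side vanishes for every index $i$ involved (an equilibrium). Then: - (i) there is no index $i$ with $\bar u_{i-1/2}<0$ and $\bar u_{i+1/2}>0$; - (ii) there is no index $i$ with $\bar u_{i-3/2}<0$, $\bar u_{i-1/2}=0$ and $\bar u_{i+1/2}>0$.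
   Context: The unknowns $u_i$ are real numbers indexed by the cells of a uniform mesh with spacing $\Delta x$. An equilibrium of the scheme is a sequence $\{u_i\}$ with $F_{i-1/2}-F_{i+1/2}+\Delta x\,\bar u_{i-1/2}=0$ for all $i$. *)

(* Defs.v *)
From Stdlib Require Import Reals ZArith.
Open Scope R_scope.

(* ubar u i  =  \bar u_{i+1/2} = (u_i + u_{i+1})/2 *)
Definition ubar (u : Z -> R) (i : Z) : R := (u i + u (i + 1)%Z) / 2.

(* flux u i  =  F_{i+1/2} (upwind flux for Burgers, defined by the sign of ubar) *)
Definition flux (u : Z -> R) (i : Z) : R :=
  if Rlt_dec 0 (ubar u i) then (u i) ^ 2 / 2
  else if Rlt_dec (ubar u i) 0 then (u (i + 1)%Z) ^ 2 / 2
  else 0.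

Definition equilibrium (dx : R) (u : Z -> R) : Prop :=
  forall i : Z, flux u (i - 1)%Z - flux u i + dx * ubar u (i - 1)%Z = 0.

(* Main.v *)
Require Import Defs.
From Stdlib Require Import Reals ZArith Lra Lia.
Open Scope R_scope.

Theorem mainTheorem4 (dx : R) (u : Z -> R) :
  0 < dx -> equilibrium dx u ->
  (~ exists i : Z, ubar u (i - 1)%Z < 0 /\ ubar u i > 0) /\
  (~ exists i : Z, ubar u (i - 2)%Z < 0 /\ ubar u (i - 1)%Z = 0 /\ ubar u i > 0).
Proof.
  intros Hdx He. split.
  - intros [i [H1 H2]].
    pose proof (He i) as E. unfold flux in E.
    replace (i - 1 + 1)%Z with i in E by lia.
    destruct (Rlt_dec 0 (ubar u (i-1))); [lra|].
    destruct (Rlt_dec (ubar u (i-1)) 0); [|lra].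
    destruct (Rlt_dec 0 (ubar u i)); [|lra].
    assert (dx * ubar u (i-1) < 0) by (apply Rmult_pos_neg; lra). lra.
  - intros [i [H1 [H2 H3]]].
    pose proof (He (i-1)%Z) as E1. pose proof (He i) as E2.
    unfold flux in E1, E2.
    replace (i - 1 - 1)%Z with (i-2)%Z in E1 by lia.
    replace (i - 2 + 1)%Z with (i-1)%Z in E1 by lia.
    replace (i - 1 + 1)%Z with i in E2 by lia.
    destruct (Rlt_dec 0 (ubar u (i-2))); [lra|].
    destruct (Rlt_dec (ubar u (i-2)) 0); [|lra].
    destruct (Rlt_dec 0 (ubar u (i-1))); [lra|].
    destruct (Rlt_dec (ubar u (i-1)) 0); [lra|].
    destruct (Rlt_dec 0 (ubar u i)); [|lra].
    assert (dx * ubar u (i-2) < 0) by (apply Rmult_pos_neg; lra).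
    rewrite H2 in E2.
    unfold ubar in H2. replace (i - 1 + 1)%Z with i in H2 by lia.
    assert (u i = - u (i-1)%Z) by lra.
    rewrite H0 in E2. simpl in E1, E2. nra.
Qed.
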